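(* Let $(M,J,g)$ be a quasi-K\''ahler manifold with Norden metric and let $\nabla'$ be the connection with totally skew-symmetric torsion $\nabla'_xy=\nabla_xy+Q(x,y)$, where $Q(x,y)=\frac14\{(\nabla_xJ)Jy-(\nabla_{Jx}J)y-2(\nabla_yJ)Jx\}$. Suppose the torsion of $\nabla'$ is parallel with respect to $\nabla'$ and the curvature tensor $R'$ of $\nabla'$ is a K\''ahler tensor. Then $$R'(x,y,z,w)=R(x,y,z,w)+g\bigl(Q(x,y),Q(z,w)\bigr)$$ for all vector fields $x,y,z,w$.
   Context: An almost complex manifold with Norden metric $(M,J,g)$ has $J^2=-\mathrm{Id}$, $g(Jx,Jy)=-g(x,y)$; $\nabla$ is the Levi-Civita connection of $g$, $F(x,y,z)=g((\nabla_xJ)y,z)$, and the manifold is quasi-K\''ahler if $F(x,y,z)+F(y,z,x)+F(z,x,y)=0$. The torsion of $\nabla'$ is $T(x,y)=\nabla'_xy-\nabla'_yx-[x,y]$. For a connection $D$, $R^D(x,y)z=D_xD_yz-D_yD_xz-D_{[x,y]}z$ and $R^D(x,y,z,w)=g(R^D(x,y)z,w)$; $R$ is the curvature of $\nabla$ and $R'$ that of $\nabla'$. A $(0,4)$-tensor $L$ is a K\''ahler tensor if $L(x,y,z,w)=-L(y,x,z,w)=-L(x,y,w,z)$, $L(x,y,z,w)+L(y,z,x,w)+L(z,x,y,w)=0$, and $L(x,y,Jz,Jw)=-L(x,y,z,w)$. *)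

(* Defs.v *)
(* Algebraic (Lie--Rinehart) model of a smooth manifold:
   C  = algebra of smooth real functions (a commutative R-algebra) /\
   V  = C-module of vector fields,
   der x f  = x(f) (action of vector fields on functions) /\
   br x y   = Lie bracket [x,y]. *)
From HB Require Import structures.
From mathcomp Require Import all_boot all_order all_algebra.
From mathcomp Require Import reals.
Set Implicit Arguments. Unset Strict Implicit. Unset Printing Implicit Defensive.
Import Order.TTheory GRing.Theory Num.Theory.
Local Open Scope ring_scope.

Section Geometry.
Variables (R : realType) (C : comAlgType R) (V : lmodType C).

Definition rsc (r : R) (v : V) : V := (r%:A : C) *: v.

Definition is_vector_fields (der : V -> C -> C) (br : V -> V -> V) : Prop :=
  ((forall x (a : R) f h, der x (a *: f + h) = a *: der x f + der x h) /\
      (forall x f h, der x (f * h) = f * der x h + h * der x f) /\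
      (forall (a : C) x y f, der (a *: x + y) f = a * der x f + der y f) /\
      (forall x y f, der (br x y) f = der x (der y f) - der y (der x f)) /\
      (forall x (a : R) y z, br x (rsc a y + z) = rsc a (br x y) + br x z) /\
      (forall x y, br x y = - br y x) /\
      (forall x y z, br x (br y z) + br y (br z x) + br z (br x y) = 0)
    /\ (forall x (f : C) y, br x (f *: y) = f *: br x y + der x f *: y)).

Definition is_metric (g : V -> V -> C) : Prop :=
  ((forall x y, g x y = g y x) /\
      (forall (a : C) x y z, g (a *: x + y) z = a * g x z + g y z)
    /\ (forall x, (forall y, g x y = 0) -> x = 0)).

Definition is_Norden (J : V -> V) (g : V -> V -> C) : Prop :=
  ((forall (a : C) x y, J (a *: x + y) = a *: J x + J y) /\
      (forall x, J (J x) = - x)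
    /\ (forall x y, g (J x) (J y) = - g x y)).

Definition is_connection (der : V -> C -> C) (D : V -> V -> V) : Prop :=
  ((forall (a : C) x y z, D (a *: x + y) z = a *: D x z + D y z) /\
      (forall x y z, D x (y + z) = D x y + D x z)
    /\ (forall x (f : C) y, D x (f *: y) = f *: D x y + der x f *: y)).

Definition is_LeviCivita (der : V -> C -> C) (br : V -> V -> V)
  (g : V -> V -> C) (nabla : V -> V -> V) : Prop :=
  (is_connection der nabla /\
      (forall x y, nabla x y - nabla y x = br x y)
    /\ (forall x y z, der x (g y z) = g (nabla x y) z + g y (nabla x z))).

Definition nablaJ (J : V -> V) (nabla : V -> V -> V) (x y : V) : V :=
  nabla x (J y) - J (nabla x y).

Definition Ften (g : V -> V -> C) (J : V -> V) (nabla : V -> V -> V)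
  (x y z : V) : C := g (nablaJ J nabla x y) z.

Definition quasi_Kaehler (g : V -> V -> C) (J : V -> V) (nabla : V -> V -> V)
  : Prop :=
  forall x y z, Ften g J nabla x y z + Ften g J nabla y z x
                + Ften g J nabla z x y = 0.

Definition Qten (J : V -> V) (nabla : V -> V -> V) (x y : V) : V :=
  rsc (4%:R^-1) (nablaJ J nabla x (J y) - nablaJ J nabla (J x) y
                 - rsc 2%:R (nablaJ J nabla y (J x))).

Definition nablap (J : V -> V) (nabla : V -> V -> V) (x y : V) : V :=
  nabla x y + Qten J nabla x y.

Definition torsion (br : V -> V -> V) (D : V -> V -> V) (x y : V) : V :=
  D x y - D y x - br x y.

Definition torsion_parallel (br : V -> V -> V) (D : V -> V -> V) : Prop :=
  forall x y z,
    D x (torsion br D y z) - torsion br D (D x y) z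
    - torsion br D y (D x z) = 0.

Definition curv (br : V -> V -> V) (D : V -> V -> V) (x y z : V) : V :=
  D x (D y z) - D y (D x z) - D (br x y) z.

Definition curv4 (br : V -> V -> V) (g : V -> V -> C) (D : V -> V -> V)
  (x y z w : V) : C := g (curv br D x y z) w.

Definition Kaehler_tensor (J : V -> V) (L : V -> V -> V -> V -> C) : Prop :=
  (forall x y z w, L x y z w = - L y x z w) /\
  (forall x y z w, L x y z w = - L x y w z) /\
  (forall x y z w, L x y z w + L y z x w + L z x y w = 0) /\
  (forall x y z w, L x y (J z) (J w) = - L x y z w).

End Geometry.

(* Main.v *)
Require Import Defs.
From HB Require Import structures.
From mathcomp Require Import all_boot all_order all_algebra.
From mathcomp Require Import reals ring.
Import Order.TTheory GRing.Theory Num.Theory.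
Local Open Scope ring_scope.
Set Implicit Arguments. Unset Strict Implicit. Unset Printing Implicit Defensive.
Lemma add0f (U W : zmodType) (f : U -> W) : {morph f : a b / a + b} -> f 0 = 0.
Proof. move=> h; have e := h 0 0; rewrite addr0 in e; apply: (addrI (f 0)); by rewrite addr0 -e. Qed.

Lemma addNf (U W : zmodType) (f : U -> W) : {morph f : a b / a + b} -> forall a, f (- a) = - f a.
Proof. move=> h a; apply/eqP; rewrite -addr_eq0 -h addNr. apply/eqP; exact: (add0f h). Qed.

Lemma halve (R : realType) (W : lmodType R) (v : W) n : v *+ n.+1 = 0 -> v = 0.
Proof.
move=> h; rewrite -[v]scale1r.
have -> : (1 : R) = (n.+1%:R)^-1 *+ n.+1 by rewrite -[RHS]mulr_natr mulVf // pnatr_eq0.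
by rewrite -scalerMnl scalerMnr h scaler0.
Qed.

Lemma tst (R : realType) (C : comAlgType R) (a b : C) : a * (b + a) = a * a + b * a.
Proof. ring. Qed.
Lemma halve2 (R : realType) (C : comAlgType R) (c : C) : c + c = 0 -> c = 0.
Proof. move=> h; apply: (@halve R C c 1); by rewrite mulr2n. Qed.
Ltac lin1 E := match type of E with ?e = _ => transitivity e; [ring | exact E] end.

Lemma key (R : realType) (C : comAlgType R) (V : lmodType C)
  (br nab Q : V -> V -> V) (g : V -> V -> C) :
  (forall x y, g x y = g y x) ->
  (forall x y z, g (x + y) z = g x z + g y z) ->
  (forall x, (forall y, g x y = 0) -> x = 0) ->
  (forall x y z, nab (x + y) z = nab x z + nab y z) ->
  (forall x y z, nab x (y + z) = nab x y + nab x z) ->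
  (forall x y, nab x y - nab y x = br x y) ->
  (forall x y, br x y = - br y x) ->
  (forall x y z, br x (br y z) + br y (br z x) + br z (br x y) = 0) ->
  (forall x y z, Q (x + y) z = Q x z + Q y z) ->
  (forall x y z, Q x (y + z) = Q x y + Q x z) ->
  (forall x y z, g (Q x y) z = - g (Q y x) z) ->
  (forall x y z, g (Q x y) z = - g (Q x z) y) ->
  torsion_parallel br (fun x y => nab x y + Q x y) ->
  (forall x y z w, curv4 br g (fun x y => nab x y + Q x y) x y z w
     + curv4 br g (fun x y => nab x y + Q x y) y z x w
     + curv4 br g (fun x y => nab x y + Q x y) z x y w = 0) ->
  forall x y z w, curv4 br g (fun x y => nab x y + Q x y) x y z w
    = curv4 br g nab x y z w + g (Q x y) (Q z w).
Proof.
move=> gs gD gnd nD1 nD2 TF brA Jac QD1 QD2 q12 q23 Par Bi.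
have g0 : forall z, g 0 z = 0 by move=> z; apply: (add0f (f:=g^~z)) => a b; exact: gD.
have gN : forall x z, g (-x) z = - g x z by move=> x z; apply: (addNf (f:=g^~z)) => a b; exact: gD.
have gD2 : forall x y z, g z (x+y) = g z x + g z y by move=> x y z; rewrite gs gD gs [g y z]gs.
have gN2 : forall x z, g z (-x) = - g z x by move=> x z; rewrite gs gN gs.
have nN1 : forall x z, nab (-x) z = - nab x z by move=> x z; apply: (addNf (f:= nab^~z)) => a b; exact: nD1.
have nN2 : forall x z, nab z (-x) = - nab z x by move=> x z; apply: (addNf (f:= nab z)) => a b; exact: nD2.
have QN1 : forall x z, Q (-x) z = - Q x z by move=> x z; apply: (addNf (f:= Q^~z)) => a b; exact: QD1.
have QN2 : forall x z, Q z (-x) = - Q z x by move=> x z; apply: (addNf (f:= Q z)) => a b; exact: QD2.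
have veq : forall u v, (forall w, g u w = g v w) -> u = v.
  move=> u v h; apply/eqP; rewrite -subr_eq0; apply/eqP; apply: gnd => w.
  by rewrite gD gN h subrr.
have Qsk : forall a b, Q b a = - Q a b by move=> a b; apply: veq => w; rewrite gN q12.
have qcyc : forall a b c, g (Q a b) c = g (Q b c) a by move=> a b c; rewrite q12 q23 opprK.
have Tq : forall a b, torsion br (fun x y => nab x y + Q x y) a b = Q a b + Q a b.
  move=> a b; rewrite /torsion -TF (Qsk a b); apply: veq => w.
  rewrite !(gD, gN); ring.
have P0 : forall x y z w, g (nab x (Q y z)) w = g (Q (nab x y) z) w + g (Q (Q x y) z) w
     + g (Q y (nab x z)) w + g (Q y (Q x z)) w - g (Q x (Q y z)) w.
  move=> x y z w; have := Par x y z; rewrite !Tq /= => /(congr1 (g^~ w)).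
  rewrite g0 !(gD, gN, nD2, nN2, QD1, QN1, QD2, QN2) => E.
  apply/eqP; rewrite -subr_eq0; apply/eqP; apply: halve2; lin1 E.
have Dl2 : forall x y z w,
    g (curv br (fun x y => nab x y + Q x y) x y z) w = g (curv br nab x y z) w
    + g (Q z w) (Q x y) + g (Q z w) (Q x y) - g (Q y w) (Q x z) + g (Q x w) (Q y z).
  move=> x y z w; rewrite /curv /= -(TF x y).
  rewrite !(gD, gN, nD1, nN1, nD2, nN2, QD1, QN1, QD2, QN2) !P0.
  rewrite (Qsk x y) !QN1 gN [g (Q (Q x y) z) w]qcyc.
  rewrite [g (Q y (Q x z)) w]q23 [g (Q x (Q y z)) w]q23.
  ring.
have nbr : forall a b c, nab (br a b) c
     = nab c (nab a b) - nab c (nab b a) - br c (br a b).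
  move=> a b c; rewrite [br c (br a b)]brA -(TF (br a b) c) -(TF a b).
  apply: veq => w; rewrite !(gD, gN, nD1, nN1, nD2, nN2); ring.
have Bn : forall x y z w, g (curv br nab x y z) w + g (curv br nab y z x) w
     + g (curv br nab z x y) w = 0.
  move=> x y z w; rewrite /curv !nbr.
  rewrite -(g0 w) -(Jac x y z) !(gD, gN); ring.
move=> x y z w.
have E := Bi x y z w; rewrite /curv4 !Dl2 in E.
have Bnx := Bn x y z w.
rewrite (Qsk z x) (Qsk x y) (Qsk y z) !gN2 in E.
have S0 : g (Q z w) (Q x y) + g (Q x w) (Q y z) + g (Q y w) (Q z x) = 0.
  apply: (@halve _ _ _ 3).
  match type of E with ?e = _ => match type of Bnx with ?f = _ =>
    transitivity (e - f); [ring | by rewrite E Bnx subrr] end end.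
rewrite /curv4 Dl2 [g (Q x y) (Q z w)]gs.
rewrite (Qsk z x) gN2.
apply/eqP; rewrite -subr_eq0; apply/eqP; lin1 S0.
Qed.

Theorem corollary5p2 (R : realType) (C : comAlgType R) (V : lmodType C)
  (der : V -> C -> C) (br : V -> V -> V) (g : V -> V -> C) (J : V -> V)
  (nabla : V -> V -> V) :
  is_vector_fields der br ->
  is_metric g ->
  is_Norden J g ->
  is_LeviCivita der br g nabla ->
  quasi_Kaehler g J nabla ->
  torsion_parallel br (nablap J nabla) ->
  Kaehler_tensor J (curv4 br g (nablap J nabla)) ->
  forall x y z w : V,
    curv4 br g (nablap J nabla) x y z w
    = curv4 br g nabla x y z w + g (Qten J nabla x y) (Qten J nabla z w).
Proof.
move=> [_ [_ [_ [_ [_ [brA [Jac _]]]]]]] [gs [glin gnd]] [Jlin [JJ gJJ]].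
move=> [[nlin1 [nD2 _]] [TF met]] Qk Par [_ [_ [Bi _]]].
have gD : forall x y z, g (x + y) z = g x z + g y z.
  by move=> x y z; have := glin 1 x y z; rewrite scale1r mul1r.
have nD1 : forall x y z, nabla (x + y) z = nabla x z + nabla y z.
  by move=> x y z; have := nlin1 1 x y z; rewrite !scale1r.
have JD : forall x y, J (x + y) = J x + J y.
  by move=> x y; have := Jlin 1 x y; rewrite !scale1r.
have g0 : forall z, g 0 z = 0 by move=> z; apply: (add0f (f:=g^~z)) => a b; exact: gD.
have gN : forall x z, g (-x) z = - g x z by move=> x z; apply: (addNf (f:=g^~z)) => a b; exact: gD.
have gN2 : forall x z, g z (-x) = - g z x by move=> x z; rewrite gs gN gs.
have gZ : forall a x z, g (a *: x) z = a * g x z.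
  by move=> a x z; rewrite -[a *: x]addr0 glin g0 addr0.
have nN1 : forall x z, nabla (-x) z = - nabla x z by move=> x z; apply: (addNf (f:= nabla^~z)) => a b; exact: nD1.
have nN2 : forall x z, nabla z (-x) = - nabla z x by move=> x z; apply: (addNf (f:= nabla z)) => a b; exact: nD2.
have JN : forall x, J (-x) = - J x by move=> x; apply: (addNf (f:= J)) => a b; exact: JD.
have veq : forall u v, (forall w, g u w = g v w) -> u = v.
  move=> u v h; apply/eqP; rewrite -subr_eq0; apply/eqP; apply: gnd => w.
  by rewrite gD gN h subrr.
have gJ : forall u v, g (J u) v = g u (J v).
  move=> u v; apply: oppr_inj; by rewrite -[RHS]gJJ JJ gN2.
have NJ1 : forall a b c, nablaJ J nabla (a + b) c = nablaJ J nabla a c + nablaJ J nabla b c.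
  move=> a b c; apply: veq => w; rewrite /nablaJ !(nD1, JD) !(gD, gN); ring.
have NJ2 : forall a b c, nablaJ J nabla a (b + c) = nablaJ J nabla a b + nablaJ J nabla a c.
  move=> a b c; apply: veq => w; rewrite /nablaJ !(JD, nD2) !(gD, gN); ring.
have QD1 : forall x x' y, Qten J nabla (x + x') y = Qten J nabla x y + Qten J nabla x' y.
  move=> x x' y; apply: veq => w; rewrite /Qten /rsc !(JD, NJ1, NJ2) !(gD, gN, gZ); ring.
have QD2 : forall x y y', Qten J nabla x (y + y') = Qten J nabla x y + Qten J nabla x y'.
  move=> x y y'; apply: veq => w; rewrite /Qten /rsc !(JD, NJ1, NJ2) !(gD, gN, gZ); ring.
have Fa : forall a b c, g (nablaJ J nabla a b) c = g (nablaJ J nabla a c) b.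
  move=> a b c; rewrite /nablaJ !(gD, gN) !gJ.
  have M1 := met a (J b) c; have M2 := met a b (J c).
  rewrite [g (J b) c]gJ M2 [g (J b) _]gs [g b _]gs in M1.
  apply/eqP; rewrite -subr_eq0; apply/eqP.
  match type of M1 with ?e1 = ?e2 => transitivity (e2 - e1); [ring | by rewrite M1 subrr] end.
have Fb : forall a b c, g (nablaJ J nabla a (J b)) c = - g (nablaJ J nabla a b) (J c).
  move=> a b c; rewrite /nablaJ JJ nN2 !(gD, gN, gJJ) !gJ; ring.
have Fc : forall a b c, g (nablaJ J nabla a b) c + g (nablaJ J nabla b c) a + g (nablaJ J nabla c a) b = 0.
  by move=> a b c; have := Qk a b c; rewrite /Ften.
have qE : forall x y z, g (Qten J nabla x y) z = ((4%:R^-1 : R)%:A : C) *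
    (g (nablaJ J nabla x (J y)) z - g (nablaJ J nabla (J x) y) z
     - (1 *+ 2) * g (nablaJ J nabla y (J x)) z).
  move=> x y z; rewrite /Qten /rsc; move: (nablaJ J nabla) => N'.
  by rewrite !(gD, gN, gZ) scaler_nat.
have q12 : forall x y z, g (Qten J nabla x y) z = - g (Qten J nabla y x) z.
  move=> x y z; rewrite !qE.
  have K1 := Fc x (J y) z; have K2 := Fc (J x) y z.
  rewrite (Fa (J y) z x) in K1; rewrite (Fa y z (J x)) (Fb z x y) in K2.
  apply/eqP; rewrite -subr_eq0; apply/eqP.
  match type of K1 with ?e1 = _ => match type of K2 with ?e2 = _ =>
    transitivity (- ((4%:R^-1 : R)%:A : C) * (e1 + e2)); [ring | by rewrite K1 K2 addr0 mulr0] end end.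
have q23 : forall x y z, g (Qten J nabla x y) z = - g (Qten J nabla x z) y.
  move=> x y z; rewrite !qE.
  rewrite (Fa x (J z) y) (Fb x y z) (Fa (J x) z y).
  have K := Fc (J x) y z; rewrite (Fa y z (J x)) in K.
  apply/eqP; rewrite -subr_eq0; apply/eqP.
  match type of K with ?e1 = _ =>
    transitivity (- ((4%:R^-1 : R)%:A : C) * (1 *+ 2) * e1); [ring | by rewrite K mulr0] end.
move=> x y z w.
apply: (key gs gD gnd nD1 nD2 TF brA Jac QD1 QD2 q12 q23 Par Bi).
Qed.
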